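(* Let $G=\prod_{1\leq i\leq k}C_{p^{r_i}}$ be a finite non-cyclic abelian $p$-group with $r_1\geq r_2\geq\dots\geq r_k$ and $k\geq 2$. Then $\Delta_D(G)^*$ is disconnected if and only if $r_2=1$.
   Context: $C_n$ denotes the cyclic group of order $n$. The deep commuting graph $\Delta_D(G)$ has vertex set $G$, distinct vertices adjacent iff their preimages commute in a Schur cover $\tilde G$ of $G$ (a central extension $\{e\}\to M(G)\to\tilde G\to G\to\{e\}$ with kernel contained in $Z(\tilde G)\cap[\tilde G,\tilde G]$, of maximal order; $M(G)$ the Schur multiplier). A vertex is dominant if adjacent to every other vertex; the reduced graph $\Gamma^*$ is the subgraph induced by the non-dominant vertices. *)

(* Defs.v *)
From HB Require Import structures.
From mathcomp Require Import all_boot all_order all_fingroup all_solvable.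
Set Implicit Arguments. Unset Strict Implicit. Unset Printing Implicit Defensive.
Local Open Scope group_scope.

Definition stem_ext (gT hT : finGroupType) (G : {set gT}) (H : {group hT})
    (f : {morphism H >-> gT}) : Prop :=
  f @* H = G /\ 'ker f \subset 'Z(H) :&: H^`(1).

Definition schur_cover (gT hT : finGroupType) (G : {set gT}) (H : {group hT})
    (f : {morphism H >-> gT}) : Prop :=
  stem_ext G f /\
  forall (kT : finGroupType) (K : {group kT}) (g : {morphism K >-> gT}),
    stem_ext G g -> #|'ker g| <= #|'ker f|.

(* adjacency in the deep commuting graph (w.r.t. the cover f):
   distinct x, y in G are adjacent iff some (equivalently every) preimages commute *)
Definition deep_adj (gT hT : finGroupType) (G : {set gT}) (H : {group hT})
    (f : {morphism H >-> gT}) (x y : gT) : bool :=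
  [&& x \in G, y \in G, x != y &
   [exists x' in H, exists y' in H,
      [&& f x' == x, f y' == y & x' * y' == y' * x']]].

Definition dominant (gT hT : finGroupType) (G : {set gT}) (H : {group hT})
    (f : {morphism H >-> gT}) (v : gT) : bool :=
  (v \in G) && [forall w in G, (w != v) ==> deep_adj G f v w].

(* vertex set of the reduced graph *)
Definition nondominant (gT hT : finGroupType) (G : {set gT}) (H : {group hT})
    (f : {morphism H >-> gT}) : {set gT} :=
  [set v in G | ~~ dominant G f v].

Definition reduced_rel (gT hT : finGroupType) (G : {set gT}) (H : {group hT})
    (f : {morphism H >-> gT}) : rel gT :=
  [rel x y | [&& x \in nondominant G f, y \in nondominant G f & deep_adj G f x y]].

Definition reduced_disconnected (gT hT : finGroupType) (G : {set gT})
    (H : {group hT}) (f : {morphism H >-> gT}) : Prop :=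
  exists u v, [/\ u \in nondominant G f, v \in nondominant G f &
                  ~~ connect (reduced_rel G f) u v].

(* Main.v *)
Require Import Defs.
From HB Require Import structures.
From mathcomp Require Import all_boot all_order all_fingroup all_solvable all_algebra all_field mxabelem.
Set Implicit Arguments. Unset Strict Implicit. Unset Printing Implicit Defensive.
Import GRing.Theory.

Record cocycle (T0 : finGroupType) (R : finZmodType) := Cocycle {
  cfun :> T0 -> T0 -> R;
  cocA : forall u v w, (cfun u v + cfun (u * v)%g w = cfun v w + cfun u (v * w)%g)%R;
  coc1l : forall u, cfun 1%g u = 0%R;
  coc1r : forall u, cfun u 1%g = 0%R }.

Definition tw (T0 : finGroupType) (R : finZmodType) (c : cocycle T0 R) : Type := (T0 * R)%type.

HB.instance Definition _ (T0 : finGroupType) (R : finZmodType) (c : cocycle T0 R) :=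
  Finite.copy (tw c) (T0 * R)%type.

Section Tw.
Variables (T0 : finGroupType) (R : finZmodType) (c : cocycle T0 R).
Local Open Scope ring_scope.
Definition tw_mul (x y : tw c) : tw c := ((x.1 * y.1)%g, x.2 + y.2 + c x.1 y.1).
Definition tw_one : tw c := (1%g, 0).
Definition tw_inv (x : tw c) : tw c := (x.1^-1%g, - x.2 - c x.1^-1%g x.1).
Lemma tw_mulA : associative tw_mul.
Proof.
move=> [x1 x2] [y1 y2] [z1 z2]; rewrite /tw_mul /=; congr (_, _); first by rewrite mulgA.
rewrite !addrA (addrAC (x2 + y2)) -[RHS]addrA.
by rewrite (addrAC _ (c y1 z1) z2) -[LHS]addrA -cocA !addrA (addrAC _ z2).
Qed.
Lemma tw_mul1 : left_id tw_one tw_mul.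
Proof. by move=> [x1 x2]; rewrite /tw_mul /= mul1g add0r coc1l addr0. Qed.
Lemma tw_mulV : left_inverse tw_one tw_inv tw_mul.
Proof.
move=> [x1 x2]; rewrite /tw_mul /tw_one /= mulVg; congr (_, _).
by rewrite addrAC subrK addNr.
Qed.
End Tw.

HB.instance Definition _ (T0 : finGroupType) (R : finZmodType) (c : cocycle T0 R) :=
  Finite_isGroup.Build (tw c) (@tw_mulA T0 R c) (@tw_mul1 T0 R c) (@tw_mulV T0 R c).

Lemma twmulE (T0 : finGroupType) (R : finZmodType) (c : cocycle T0 R) (x y : tw c) :
  (x * y)%g = ((x.1 * y.1)%g, (x.2 + y.2 + c x.1 y.1)%R).
Proof. by []. Qed.
Lemma tw1E (T0 : finGroupType) (R : finZmodType) (c : cocycle T0 R) :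
  (1 : tw c)%g = (1%g, 0%R).
Proof. by []. Qed.

Local Open Scope group_scope.

Lemma der_sub_ker (aT rT : finGroupType) (D : {group aT}) (phi : {morphism D >-> rT}) :
  abelian (phi @* D) -> D^`(1) \subset 'ker phi.
Proof.
move=> ab; rewrite ker_trivg_morphim der_sub /= morphim_der //.
by move/derG1P: ab => ->.
Qed.

Lemma ord_prime (aT : finGroupType) (x : aT) q : prime q -> x ^+ q = 1 -> x != 1 -> #[x] = q.
Proof.
move=> qp xq x1; have : #[x] %| q by rewrite order_dvdn xq.
case/primeP: qp => _ qd /qd /orP[|/eqP //].
by rewrite order_eq1 (negbTE x1).
Qed.

Section Gen.
Variables (gT hT : finGroupType) (G : {group gT}) (H : {group hT}) (f : {morphism H >-> gT}).
Hypothesis hstem : stem_ext G f.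
Hypothesis hab : abelian G.
Variable (R : finComNzRingType) (lam mu : gT -> R).
Hypothesis lamM : {in G &, forall x y, lam (x * y) = (lam x + lam y)%R}.
Hypothesis muM : {in G &, forall x y, mu (x * y) = (mu x + mu y)%R}.

Lemma addmor1 (m : gT -> R) : {in G &, forall x y, m (x * y) = (m x + m y)%R} -> m 1 = 0%R.
Proof.
move=> mM; have h := mM 1 1 (group1 G) (group1 G); rewrite mulg1 in h.
by apply: (addrI (m 1)); rewrite addr0 -h.
Qed.

Definition fH (u : subg_of H) : gT := f (sgval u).
Lemma fH_G u : fH u \in G.
Proof. by have [imf _] := hstem; rewrite -imf; apply: mem_morphim; apply: subgP. Qed.
Lemma fHM u v : fH (u * v) = fH u * fH v.
Proof. by rewrite /fH /= morphM ?subgP. Qed.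

Definition cf (u v : subg_of H) : R := (lam (fH u) * mu (fH v))%R.
Lemma cfA u v w : (cf u v + cf (u * v) w = cf v w + cf u (v * w))%R.
Proof.
rewrite /cf !fHM lamM ?muM ?fH_G // mulrDl mulrDr.
by rewrite addrA addrC.
Qed.
Lemma cf1l u : cf 1 u = 0%R.
Proof. by rewrite /cf /fH /= morph1 (addmor1 lamM) mul0r. Qed.
Lemma cf1r u : cf u 1 = 0%R.
Proof. by rewrite /cf /fH /= morph1 (addmor1 muM) mulr0. Qed.

Definition cc := Cocycle cfA cf1l cf1r.
Definition Tw := tw cc.

Definition Fm (x : Tw) : gT := fH x.1.
Lemma FmM : {in [set: Tw] &, {morph Fm : x y / x * y}}.
Proof. by move=> x y _ _; rewrite /Fm fHM. Qed.
Canonical Fm_morph := Morphism FmM.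
Definition pim (x : Tw) : subg_of H := x.1.
Lemma pimM : {in [set: Tw] &, {morph pim : x y / x * y}}.
Proof. by []. Qed.
Canonical pim_morph := Morphism pimM.

Lemma imF : Fm @* [set: Tw] = G.
Proof.
apply/eqP; rewrite eqEsubset; apply/andP; split.
  by apply/subsetP=> _ /morphimP[x _ _ ->]; apply: fH_G.
have [imf _] := hstem; rewrite -{1}imf; apply/subsetP=> _ /morphimP[h _ Hh ->].
apply/morphimP; exists ((subg H h, 0%R) : Tw); rewrite ?inE //.
by rewrite /= /Fm /fH /= subgK.
Qed.

Lemma card_subgT : #|[set: subg_of H]| = #|H|.
Proof. by rewrite -(card_injm (injm_sgval H)) ?subsetT // im_sgval. Qed.

Lemma card_Tw : #|[set: Tw]| = (#|H| * #|R|)%N.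
Proof. by rewrite cardsT card_prod -card_subgT cardsT. Qed.

Lemma kerf_sub : 'ker f \subset H.
Proof. exact: subsetIl. Qed.

Lemma kerF_card : #|'ker Fm| = (#|'ker f| * #|R|)%N.
Proof.
have [imf _] := hstem.
have i1 := card_morphim Fm_morph [set: Tw]%G; rewrite setIid imF in i1.
have e1 := LagrangeI [set: Tw]%G ('ker Fm); rewrite -i1 setTI in e1.
have i2 := card_morphim f H; rewrite setIid imf in i2.
have e2 := LagrangeI H ('ker f); rewrite -i2 (setIidPr kerf_sub) in e2.
have G0 : (0 < #|G|)%N by apply: cardG_gt0.
apply/eqP; rewrite -(eqn_pmul2r G0) e1 card_Tw -e2.
by rewrite mulnAC.
Qed.

Lemma kerF_cent : 'ker Fm \subset 'C([set: Tw]).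
Proof.
apply/subsetP=> x kx; apply/centP=> y _.
have fx : f (sgval x.1) = 1 by have := mker kx.
have kf : sgval x.1 \in 'ker f.
  apply/kerP; first exact: subgP.
  exact: fx.
have [_ sk] := hstem; move/subsetP: sk => /(_ _ kf); rewrite inE => /andP[zx _].
have cxy : commute (sgval x.1) (sgval y.1).
  by move: zx; rewrite /center inE => /andP[_ /centP]; apply; apply: subgP.
rewrite /commute !twmulE /=.
have -> : (x.1 * y.1 = y.1 * x.1)%g by apply: val_inj; rewrite /= cxy.
rewrite /cf /fH fx (addmor1 lamM) (addmor1 muM) mul0r mulr0.
by rewrite (addrC x.2).
Qed.

Lemma derTw_ker : [set: Tw]^`(1) \subset 'ker Fm.
Proof. by apply: der_sub_ker; rewrite imF. Qed.

Lemma derH_ker : H^`(1) = 'ker f.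
Proof.
have [imf sk] := hstem.
apply/eqP; rewrite eqEsubset; apply/andP; split.
  by apply: der_sub_ker; rewrite imf.
by move: sk; rewrite subsetI => /andP[_].
Qed.

Lemma card_pim_der : #|pim @* [set: Tw]^`(1)| = #|'ker f|.
Proof.
rewrite morphim_der ?subsetT //.
have -> : pim @* [set: Tw] = [set: subg_of H].
  apply/eqP; rewrite eqEsubset subsetT /=; apply/subsetP=> u _.
  by apply/morphimP; exists ((u, 0%R) : Tw); rewrite ?inE.
rewrite -(card_injm (injm_sgval H)) ?subsetT // morphim_der ?subsetT //.
by rewrite im_sgval derH_ker.
Qed.

Lemma gen_contra
  (hmax : forall (kT : finGroupType) (K : {group kT}) (g : {morphism K >-> gT}),
     stem_ext G g -> (#|'ker g| <= #|'ker f|)%N)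
  (L : {group Tw}) (s : R) (p : nat) :
  L \subset 'ker Fm -> L :&: [set: Tw]^`(1) = 1 ->
  ((1%g, s) : Tw) \in [set: Tw]^`(1) -> #[((1%g, s) : Tw)] = p ->
  (#|L| * p = #|R|)%N -> (1 < p)%N -> False.
Proof.
move=> sL tiL Ds ordp eLR p1.
set D := [set: Tw]^`(1).
have cardD : (#|'ker f| * p <= #|D|)%N.
  have i1 := card_morphim pim_morph D; rewrite setTI card_pim_der in i1.
  have e1 := LagrangeI D ('ker pim_morph); rewrite -i1 in e1.
  rewrite -e1 mulnC leq_mul2r; apply/orP; right.
  rewrite -ordp; apply: subset_leq_card; rewrite cycle_subG inE Ds /=.
  by apply/kerP; rewrite ?inE.
have cardDL : #|D * L| = (#|D| * #|L|)%N by rewrite TI_cardMg // setIC.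
have eqDL : D * L = 'ker Fm.
  apply/eqP; rewrite eqEcard mulG_subG derTw_ker sL /= cardDL kerF_card.
  by rewrite -eLR (mulnC #|L| p) mulnA leq_mul2r cardD orbT.
have cLT : [set: Tw] \subset 'C(L).
  by rewrite centsC (subset_trans sL) // kerF_cent.
have nL : [set: Tw] \subset 'N(L) by apply: cents_norm.
have sKq : 'ker (coset L) \subset 'ker Fm by rewrite ker_coset.
have := hmax _ ([set: Tw] / L)%G (factm_morphism sKq nL).
have -> : 'ker (factm_morphism sKq nL) = 'ker Fm / L by rewrite ker_factm.
rewrite card_quotient ?(subset_trans (subsetT _) nL) // -divgS // kerF_card.
rewrite -eLR (mulnC #|L| p) mulnA mulnK ?cardG_gt0 // leqNgt ltn_Pmulr ?cardG_gt0 //.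
move=> H0; suff hs : stem_ext G (factm_morphism sKq nL) by have := H0 hs.
split.
  by rewrite /= morphim_factm imF.
rewrite ker_factm /= subsetI; apply/andP; split.
  by rewrite /center subsetI quotientS ?subsetT // quotient_cents // kerF_cent.
rewrite -quotient_der // -eqDL; have := quotientMidr L D; rewrite /quotient => ->; exact: subxx.
Qed.

Lemma fH_comm (u v : subg_of H) : fH [~ u, v] = 1.
Proof.
rewrite /fH /= morphR ?subgP //; apply/eqP/commgP.
have := fH_G u; have := fH_G v; rewrite /fH => Gv Gu.
exact: (centsP hab).
Qed.

Lemma tw_comm (u v : subg_of H) :
  [~ ((u, 0%R) : Tw), ((v, 0%R) : Tw)] = ([~ u, v], (cf u v - cf v u)%R).
Proof.
apply: (@mulgI _ (((v, 0%R) : Tw) * ((u, 0%R) : Tw))); rewrite -commgC.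
rewrite !twmulE /=; congr (_, _); first by rewrite -commgC.
by rewrite /cf fH_comm (addmor1 muM) mulr0 !addr0 !add0r addrC subrK.
Qed.

Lemma tw_exp (w : subg_of H) (t : R) n : fH w = 1 ->
  ((w, t) : Tw) ^+ n = ((w ^+ n)%g, (t *+ n)%R).
Proof.
move=> fw; elim: n => [|n IH]; first by rewrite !expg0 mulr0n.
rewrite !expgS IH twmulE /= /cf fw (addmor1 lamM) mul0r addr0.
by rewrite mulrS.
Qed.

Lemma tw_order1 (s : R) q : prime q -> s != 0%R -> (s *+ q = 0)%R ->
  #[((1%g, s) : Tw)] = q.
Proof.
move=> qp s0 sq.
have : #[((1%g, s) : Tw)] %| q.
  by rewrite order_dvdn tw_exp ?expg1n ?sq //= /fH morph1.
case/primeP: qp => _ qd /qd /orP[|/eqP //].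
by rewrite order_eq1 => /eqP [] /eqP; rewrite (negbTE s0).
Qed.

Variable hmax : forall (kT : finGroupType) (K : {group kT}) (g : {morphism K >-> gT}),
     stem_ext G g -> (#|'ker g| <= #|'ker f|)%N.

Lemma keyA p x y : prime p -> #|R| = p -> (p%:R = 0 :> R)%R ->
  x \in H -> y \in H -> commute x y ->
  (lam (f x) * mu (f y) = lam (f y) * mu (f x))%R.
Proof.
move=> pp cR chR Hx Hy cxy; apply/eqP; rewrite -subr_eq0; apply/negPn/negP => nt.
set u := subg H x; set v := subg H y.
have cuv : [~ u, v] = 1.
  by apply/eqP/commgP; apply: val_inj; rewrite /= !subgK.
have Dt : ((1%g, (cf u v - cf v u)%R) : Tw) \in [set: Tw]^`(1).
  by rewrite -cuv -tw_comm mem_commg ?inE.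
apply: (gen_contra hmax (L := 1%G) (s := (cf u v - cf v u)%R) (p := p)) => //.
- by rewrite sub1G.
- by rewrite setI1g.
- apply: tw_order1 => //; first by rewrite /cf /fH !subgK.
  by rewrite -mulr_natr chR mulr0.
- by rewrite cards1 mul1n.
- exact: prime_gt1.
Qed.

Lemma keyB p x y : prime p -> #|R| = (p * p)%N -> ((p * p)%:R = 0 :> R)%R ->
  x \in H -> y \in H -> [~ x, y] ^+ p = 1 ->
  ((lam (f x) * mu (f y) - lam (f y) * mu (f x)) *+ p = 0)%R.
Proof.
move=> pp cR chR Hx Hy kp; apply/eqP; apply/negPn/negP => nt.
set u := subg H x; set v := subg H y.
have eu : fH u = f x by rewrite /fH /= subgK.
have ev : fH v = f y by rewrite /fH /= subgK.
set t := (cf u v - cf v u)%R.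
have et : t = (lam (f x) * mu (f y) - lam (f y) * mu (f x))%R by rewrite /t /cf eu ev.
rewrite -et in nt.
set k := [~ u, v].
have fk : fH k = 1 by apply: fH_comm.
have kp1 : k ^+ p = 1.
  apply: val_inj; change (@sgval _ H (k ^+ p) = @sgval _ H 1).
  by rewrite morphX ?inE // morphR ?inE //= !subgK.
set D := [set: Tw]^`(1).
have Dk : ((k, t) : Tw) \in D by rewrite /k /t -tw_comm mem_commg ?inE.
have tpp : (t *+ (p * p) = 0)%R by rewrite -mulr_natr chR mulr0.
have Dp : ((1%g, t *+ p)%R : Tw) \in D.
  by rewrite -kp1 -tw_exp // groupX.
have p1 : (1 < p)%N by apply: prime_gt1.
case: (boolP (((k, 0%R) : Tw) \in D)) => k0D.
  have Dt : ((1%g, t) : Tw) \in D.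
    have -> : ((1%g, t) : Tw) = ((k, 0%R) : Tw)^-1 * ((k, t) : Tw).
      apply: (@mulgI _ ((k, 0%R) : Tw)); rewrite mulKVg twmulE /= mulg1 add0r.
      by rewrite cf1r addr0.
    by rewrite groupM ?groupV.
  apply: (gen_contra hmax (L := 1%G) (s := t) (p := (p * p)%N)) => //.
  - by rewrite sub1G.
  - by rewrite setI1g.
  - have : #[((1%g, t) : Tw)] %| p ^ 2.
      by rewrite order_dvdn tw_exp ?expg1n -?mulnn ?tpp //= /fH morph1.
    case/(dvdn_pfactor _ _ pp) => m; rewrite leq_eqVlt => /orP[/eqP -> -> | ].
      by rewrite mulnn.
    rewrite ltnS => m1 om; case/negP: nt; apply/eqP.
    have : #[((1%g, t) : Tw)] %| p.
      by rewrite om -{2}(expn1 p) dvdn_exp2l.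
    rewrite order_dvdn tw_exp ?expg1n /= ?/fH ?morph1 //.
    by move/eqP => [].
  - by rewrite cards1 mul1n.
  - by rewrite (leq_trans p1) // leq_pmull // ltnW.
have ok : #[((k, 0%R) : Tw)] = p.
  apply: ord_prime => //.
    by rewrite tw_exp // kp1 mul0rn.
  by apply: contraNneq k0D => ->; apply: group1.
apply: (gen_contra hmax (L := <[((k, 0%R) : Tw)]>%G) (s := (t *+ p)%R) (p := p)) => //.
- rewrite cycle_subG; apply/kerP; first by rewrite inE.
  by rewrite /= /Fm /= fk.
- by apply: prime_TIg; rewrite ?cycle_subG // -orderE ok.
- apply: tw_order1 => //.
  by rewrite -mulrnA tpp.
- by rewrite /= -orderE ok.
Qed.

End Gen.

Definition logc (gT : finGroupType) (c x : gT) : nat :=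
  index x (mkseq (fun i => c ^+ i) #[c]).

Lemma logcK (gT : finGroupType) (c x : gT) : x \in <[c]> -> c ^+ logc c x = x.
Proof.
case/cyclePmin=> i ilt ->; rewrite /logc.
have mem : c ^+ i \in mkseq (fun i => c ^+ i) #[c].
  by apply/mapP; exists i; rewrite // mem_iota add0n.
have ilt' : index (c ^+ i) (mkseq (fun i => c ^+ i) #[c]) < #[c].
  by rewrite -{2}(size_mkseq (fun i => c ^+ i) #[c]) index_mem.
by have := nth_index 1 mem; rewrite nth_mkseq.
Qed.

Lemma natr_modn (R : nzRingType) m n : (m%:R = 0 :> R)%R -> ((n %% m)%:R = n%:R :> R)%R.
Proof. by move=> m0; rewrite {2}(divn_eq n m) natrD natrM m0 mulr0 add0r. Qed.

Lemma logc_nat (gT : finGroupType) (R : nzRingType) m (c x : gT) n :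
  m %| #[c] -> (m%:R = 0 :> R)%R -> x = c ^+ n -> ((logc c x)%:R = n%:R :> R)%R.
Proof.
move=> dm m0 ->; have := logcK (mem_cycle c n); move/eqP; rewrite eq_expg_mod_order.
move/eqP => e; rewrite -(natr_modn _ m0) -[in RHS](natr_modn _ m0).
by rewrite -(modn_dvdm _ dm) e modn_dvdm.
Qed.

Lemma logcM (gT : finGroupType) (R : nzRingType) m (c x y : gT) :
  m %| #[c] -> (m%:R = 0 :> R)%R -> x \in <[c]> -> y \in <[c]> ->
  ((logc c (x * y))%:R = (logc c x)%:R + (logc c y)%:R :> R)%R.
Proof.
move=> dm m0 xc yc; rewrite -natrD; apply: (logc_nat dm m0).
by rewrite expgD !logcK.
Qed.

Section Comp.
Variables (gT : finGroupType) (A B G : {group gT}).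
Hypothesis defG : A \x B = G.

Lemma compl_AB : B \in [complements to A in G].
Proof. by have [_ eG _ ti] := dprodP defG; apply/complP. Qed.

Lemma divgrMG : {in G &, {morph divgr A B : x y / x * y}}.
Proof. by apply: divgrM compl_AB _; have [_ _ c _] := dprodP defG. Qed.

Lemma remgrMG : {in G &, {morph remgr A B : x y / x * y}}.
Proof. by apply: remgrM compl_AB _; have [] := dprod_normal2 defG. Qed.

Lemma mem_divgrG x : x \in G -> divgr A B x \in A.
Proof. by have [_ eG _ _] := dprodP defG; rewrite -eG; apply: mem_divgr. Qed.

Lemma mem_remgrG x : x \in G -> remgr A B x \in B.
Proof. by have [_ eG _ _] := dprodP defG; rewrite -eG; apply: mem_remgr. Qed.

Lemma divgr_B x : x \in B -> divgr A B x = 1.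
Proof.
have [_ _ _ ti] := dprodP defG.
by move=> Bx; rewrite /divgr remgr_id ?mulgV.
Qed.

Lemma remgr_A x : x \in A -> remgr A B x = 1.
Proof. exact: remgr1. Qed.

Lemma divgr_A x : x \in A -> divgr A B x = x.
Proof. exact: divgr_id. Qed.

Lemma remgr_B x : x \in B -> remgr A B x = x.
Proof. by have [_ _ _ ti] := dprodP defG; apply: remgr_id. Qed.

End Comp.

Section PC.
Variables (gT hT : finGroupType) (G : {group gT}) (H : {group hT}) (f : {morphism H >-> gT}).
Hypothesis hstem : stem_ext G f.
Hypothesis hab : abelian G.

Definition pc x y := forall X Y, X \in H -> Y \in H -> f X = x -> f Y = y -> commute X Y.

Lemma preim x : x \in G -> exists2 X, X \in H & f X = x.
Proof.
have [imf _] := hstem; rewrite -imf => /morphimP[X HX _ ->].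
by exists X.
Qed.

Lemma kerf_cent X k : X \in H -> k \in 'ker f -> commute X k.
Proof.
move=> HX kk; have [_ sk] := hstem; move/subsetP: sk => /(_ _ kk).
rewrite inE => /andP[]; rewrite /center inE => /andP[_ /centP ck] _.
by apply: commute_sym; apply: ck.
Qed.

Lemma pre_ker X X' : X \in H -> X' \in H -> f X = f X' -> X^-1 * X' \in 'ker f.
Proof.
move=> HX HX' e; apply/kerP; first by rewrite groupM ?groupV.
by rewrite morphM ?groupV // morphV // e mulVg.
Qed.

Lemma pcP X Y : X \in H -> Y \in H -> commute X Y -> pc (f X) (f Y).
Proof.
move=> HX HY cXY X' Y' HX' HY' eX eY.
have k1 := pre_ker HX HX' (esym eX); have k2 := pre_ker HY HY' (esym eY).
have -> : X' = X * (X^-1 * X') by rewrite mulKVg.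
have -> : Y' = Y * (Y^-1 * Y') by rewrite mulKVg.
have Hk1 : X^-1 * X' \in H by rewrite groupM ?groupV.
apply: commuteM; apply: commute_sym; apply: commuteM.
- exact: commute_sym.
- exact: kerf_cent.
- by apply: commute_sym; apply: kerf_cent.
- by apply: commute_sym; apply: kerf_cent.
Qed.

Lemma pc_sym x y : pc x y -> pc y x.
Proof. by move=> h X Y HX HY eX eY; apply: commute_sym; apply: h. Qed.

Lemma pc_refl x : x \in G -> pc x x.
Proof. by case/preim=> X HX <-; apply: pcP. Qed.

Lemma pc_adj x y : x \in G -> y \in G -> x != y -> pc x y -> deep_adj G f x y.
Proof.
move=> Gx Gy nxy h; rewrite /deep_adj Gx Gy nxy /=.
have [X HX eX] := preim Gx; have [Y HY eY] := preim Gy.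
apply/existsP; exists X; rewrite HX /=; apply/existsP; exists Y.
by rewrite HY eX eY !eqxx /=; apply/eqP; apply: h.
Qed.

Lemma adj_pc x y : deep_adj G f x y -> pc x y.
Proof.
case/and4P=> Gx Gy _ /existsP[X /andP[HX /existsP[Y /andP[HY /and3P[/eqP eX /eqP eY /eqP c]]]]].
by rewrite -eX -eY; apply: pcP.
Qed.

Lemma dom_pc v : dominant G f v -> forall w, w \in G -> pc v w.
Proof.
case/andP=> Gv /forall_inP h w Gw; case: (eqVneq w v) => [-> | nwv].
  exact: pc_refl.
by apply: adj_pc; apply: (implyP (h w Gw)).
Qed.

Lemma pc_dom v : v \in G -> (forall w, w \in G -> pc v w) -> dominant G f v.
Proof.
move=> Gv h; rewrite /dominant Gv /=; apply/forall_inP => w Gw; apply/implyP => nwv.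
by apply: pc_adj => //; [rewrite eq_sym | apply: h].
Qed.

Lemma pcX x n : x \in G -> pc x (x ^+ n).
Proof.
case/preim=> X HX <-; rewrite -morphX //; apply: pcP; rewrite ?groupX //.
exact: commuteX.
Qed.

Lemma commR_cent X Y : X \in H -> Y \in H -> commute X [~ X, Y] /\ commute Y [~ X, Y].
Proof.
move=> HX HY; have k : [~ X, Y] \in 'ker f.
  apply/kerP; first by rewrite groupR.
  rewrite morphR //; apply/eqP/commgP.
  have [imf _] := hstem.
  have GX : f X \in G by rewrite -imf mem_morphim.
  have GY : f Y \in G by rewrite -imf mem_morphim.
  exact: (centsP hab).
by split; apply: kerf_cent.
Qed.

Lemma pcXX x y n : x \in G -> y \in G -> pc (x ^+ n) y -> pc x (y ^+ n).
Proof.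
case/preim=> X HX <-; case/preim=> Y HY <- h.
rewrite -morphX //; apply: pcP; rewrite ?groupX //.
have [c1 c2] := commR_cent HX HY.
apply/commgP; rewrite commgX //; rewrite -commXg //; apply/commgP.
by apply: h; rewrite ?groupX // morphX.
Qed.

Lemma pc1 y : y \in G -> pc 1 y.
Proof.
move=> Gy; have [X HX <-] := preim Gy; rewrite -(morph1 f).
by apply: pcP => //; apply: commute_sym; apply: commute1.
Qed.

End PC.

Lemma pc_pow (gT hT : finGroupType) (G : {group gT}) (H : {group hT}) (f : {morphism H >-> gT})
  (hstem : stem_ext G f) (a : gT) s t : a \in G -> pc f (a ^+ s) (a ^+ t).
Proof.
move=> Ga; have [A HA <-] := preim hstem Ga; rewrite -!morphX //.
by apply: (pcP hstem (groupX s HA) (groupX t HA)); apply: commuteX2.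
Qed.

Lemma caseA (gT hT : finGroupType) (G : {group gT}) (H : {group hT}) (f : {morphism H >-> gT})
  (hstem : stem_ext G f) (hab : abelian G)
  (hmax : forall (kT : finGroupType) (K : {group kT}) (g : {morphism K >-> gT}),
     stem_ext G g -> (#|'ker g| <= #|'ker f|)%N)
  (p : nat) (a b : gT) (E : {group gT}) :
  prime p -> <[a]> \x E = G -> p %| #[a] -> (forall e, e \in E -> e ^+ p = 1) ->
  b \in E -> b != 1 -> reduced_disconnected G f.
Proof.
move=> pp defG pa expE Eb nb1.
have [_ eG cAE tiAE] := dprodP defG.
have sEG : E \subset G by rewrite -eG mulG_subr.
have sAG : <[a]> \subset G by rewrite -eG mulG_subl.
have Ga : a \in G by rewrite -cycle_subG.
have Gb : b \in G by apply: (subsetP sEG).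
have pE : p.-abelem E by apply/abelemP => //; split; [apply: abelianS hab | ].
have ntE : E :!=: 1 by apply/trivgPn; exists b.
have nbA : b \notin <[a]>.
  apply: contra nb1 => bA; have : b \in <[a]> :&: E by rewrite inE bA.
  by rewrite tiAE inE.
have core : forall m y, ~~ (p %| m) -> y \in G -> y \notin <[a]> -> ~ pc f (a ^+ m) y.
  move=> m y pm Gy nyA pcy.
  set e := remgr <[a]> E y.
  have Ee : e \in E by exact: (mem_remgrG defG Gy).
  have ne1 : e != 1.
    apply: contra nyA => /eqP e1; rewrite (divgr_eq <[a]> E y) -/e e1 mulg1.
    exact: (mem_divgrG defG Gy).
  set rv := abelem_rV pE ntE.
  have nv : rv e != 0%R.
    apply: contra ne1 => /eqP v0; apply/eqP.
    move: (@abelem_rV_inj _ _ _ pE ntE e 1 Ee (group1 E)); apply.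
    by rewrite -/rv v0 /rv abelem_rV_1.
  have [i vi] : exists i, (rv e) 0%R i != 0%R.
    case: (pickP (fun i => (rv e) 0%R i != 0%R)) => [i vi | h]; first by exists i.
    case/negP: nv; apply/eqP/rowP => j; rewrite mxE; by move: (h j) => /= /negbFE /eqP.
  have chF : (p%:R = 0 :> 'F_p)%R by apply: pcharf0 (pchar_Fp pp).
  pose lam (g : gT) := ((logc a (divgr <[a]> E g))%:R : 'F_p)%R.
  pose mu (g : gT) := (rv (remgr <[a]> E g)) 0%R i.
  have lamM : {in G &, forall x y, lam (x * y) = (lam x + lam y)%R}.
    move=> x z Gx Gz; rewrite /lam (divgrMG defG) //.
    by apply: (logcM pa chF); apply: (mem_divgrG defG).
  have muM : {in G &, forall x y, mu (x * y) = (mu x + mu y)%R}.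
    move=> x z Gx Gz; rewrite /mu /rv (remgrMG defG) // abelem_rV_M ?mxE //;
      by apply: (mem_remgrG defG).
  have [X HX eX] := preim hstem (groupX m Ga).
  have [Y HY eY] := preim hstem Gy.
  have := keyA hstem hab lamM muM hmax pp (card_Fp pp) chF HX HY (pcy X Y HX HY eX eY).
  rewrite eX eY /mu (remgr1 _ (mem_cycle a m)) /rv abelem_rV_1 mxE mulr0.
  apply/eqP; apply: mulf_neq0 => //.
  rewrite /lam divgr_id ?mem_cycle // (logc_nat pa chF (erefl _)).
  by rewrite -(dvdn_pcharf (pchar_Fp pp)).
have domp : forall k, dominant G f (a ^+ (k * p)).
  move=> k; apply: (pc_dom hstem (groupX _ Ga)) => w Gw.
  apply: pc_sym; rewrite expgM; apply: (pcXX hstem hab Gw (groupX _ Ga)).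
  have [j ->] : exists j, w ^+ p = a ^+ j.
    have -> : w = divgr <[a]> E w * remgr <[a]> E w by apply: divgr_eq.
    rewrite expgMn; last first.
      have /centsP cG := hab; apply: cG.
        by apply: (subsetP sAG); exact: (mem_divgrG defG Gw).
      by apply: (subsetP sEG); exact: (mem_remgrG defG Gw).
    rewrite (expE _ (mem_remgrG defG Gw)) mulg1.
    have /cycleP[j ->] := mem_divgrG defG Gw.
    by exists (j * p)%N; rewrite expgM.
  exact: (pc_pow hstem Ga).
have step : forall x y, x \in nondominant G f -> y \in G -> pc f x y ->
    x \in <[a]> -> y \in <[a]>.
  move=> x y; rewrite inE => /andP[Gx ndx] Gy pxy /cycleP[m em].
  apply/negPn/negP => nyA; apply: (core m y) => //; last by rewrite -em.
  apply: contra ndx => /dvdnP[k km]; rewrite em km; exact: domp.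
have np1 : ~~ (p %| 1) by rewrite dvdn1; apply/negP => /eqP p1; rewrite p1 in pp.
have nda : a \in nondominant G f.
  rewrite inE Ga /=; apply/negP => /(dom_pc hstem) /(_ _ Gb) pab.
  by apply: (core 1%N b np1 Gb nbA); rewrite expg1.
have ndb : b \in nondominant G f.
  rewrite inE Gb /=; apply/negP => /(dom_pc hstem) /(_ _ Ga) /pc_sym pab.
  by apply: (core 1%N b np1 Gb nbA); rewrite expg1.
exists a, b; split => //; apply/negP => cab.
have cl : closed (reduced_rel G f) (mem <[a]>).
  move=> x y /and3P[ndx ndy adj]; apply/idP/idP.
    by apply: step => //; [rewrite inE in ndy; case/andP: ndy | apply: adj_pc adj].
  apply: step => //; first by rewrite inE in ndx; case/andP: ndx.
  by apply: pc_sym; apply: adj_pc adj.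
by have := closed_connect cl cab; rewrite cycle_id (negbTE nbA).
Qed.

Lemma adj_sym (gT hT : finGroupType) (G : {group gT}) (H : {group hT}) (f : {morphism H >-> gT})
  (hstem : stem_ext G f) x y : deep_adj G f x y -> deep_adj G f y x.
Proof.
move=> adj; have pxy := adj_pc hstem adj; case/and4P: adj => Gx Gy nxy _.
by apply: (pc_adj hstem) => //; [rewrite eq_sym | apply: pc_sym].
Qed.

Lemma rel_sym (gT hT : finGroupType) (G : {group gT}) (H : {group hT}) (f : {morphism H >-> gT})
  (hstem : stem_ext G f) : symmetric (reduced_rel G f).
Proof.
move=> x y; apply/idP/idP => /and3P[nx ny adj]; rewrite /reduced_rel /= nx ny /=;
  exact: (adj_sym hstem).
Qed.

Lemma caseB (gT hT : finGroupType) (G : {group gT}) (H : {group hT}) (f : {morphism H >-> gT})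
  (hstem : stem_ext G f) (hab : abelian G)
  (hmax : forall (kT : finGroupType) (K : {group kT}) (g : {morphism K >-> gT}),
     stem_ext G g -> (#|'ker g| <= #|'ker f|)%N)
  (p N : nat) (a b : gT) (E E2 : {group gT}) :
  prime p -> <[a]> \x E = G -> <[b]> \x E2 = E -> (p * p) %| #[a] -> (p * p) %| #[b] ->
  (forall x, x \in G -> x ^+ (p ^ N) = 1) -> ~ reduced_disconnected G f.
Proof.
move=> pp defG defE pa pb expG.
have [_ eG _ _] := dprodP defG.
have [_ eE _ _] := dprodP defE.
have sEG : E \subset G by rewrite -eG mulG_subr.
have sAG : <[a]> \subset G by rewrite -eG mulG_subl.
have Ga : a \in G by rewrite -cycle_subG.
have Eb : b \in E by rewrite -eE; apply: (subsetP (mulG_subl _ _)); apply: cycle_id.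
have Gb : b \in G by apply: (subsetP sEG).
have p1 : 1 < p by apply: prime_gt1.
have pp1 : 1 < p * p by rewrite (leq_trans p1) // leq_pmull // ltnW.
set z := a ^+ p.
have Gz : z \in G by apply: groupX.
have ndz : z \in nondominant G f.
  rewrite inE Gz /=; apply/negP => dz.
  have pzb := dom_pc hstem dz Gb.
  have [A HA eA] := preim hstem Ga; have [B HB eB] := preim hstem Gb.
  have c : commute (A ^+ p) B.
    by apply: pzb; rewrite ?groupX // morphX // eA.
  have kp : [~ A, B] ^+ p = 1.
    have [c1 _] := commR_cent hstem hab HA HB.
    by rewrite -commXg //; apply/eqP/commgP.
  have chR : ((p * p)%:R = 0 :> 'Z_(p * p))%R by apply: pchar_Zp.
  have cR : #|'Z_(p * p)| = (p * p)%N by rewrite card_ord Zp_cast.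
  pose lam (g : gT) := ((logc a (divgr <[a]> E g))%:R : 'Z_(p * p))%R.
  pose mu (g : gT) :=
    ((logc b (divgr <[b]> E2 (remgr <[a]> E g)))%:R : 'Z_(p * p))%R.
  have lamM : {in G &, forall x y, lam (x * y) = (lam x + lam y)%R}.
    move=> x y Gx Gy; rewrite /lam (divgrMG defG) //.
    by apply: (logcM pa chR); apply: (mem_divgrG defG).
  have muM : {in G &, forall x y, mu (x * y) = (mu x + mu y)%R}.
    move=> x y Gx Gy; rewrite /mu (remgrMG defG) // (divgrMG defE);
      try exact: (mem_remgrG defG).
    by apply: (logcM pb chR); apply: (mem_divgrG defE); apply: (mem_remgrG defG).
  have := keyB hstem hab lamM muM hmax pp cR chR HA HB kp.
  rewrite eA eB /lam /mu.
  rewrite (divgr_id E (cycle_id a)) (divgr_B defG Eb) (remgr_B defG Eb) (remgr1 E (cycle_id a)).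
  rewrite (divgr_id E2 (cycle_id b)) (divgr_id E2 (group1 _)).
  rewrite (logc_nat pa chR (esym (expg1 a))) (logc_nat pa chR (esym (expg0 a))).
  rewrite (logc_nat pb chR (esym (expg1 b))) (logc_nat pb chR (esym (expg0 b))).
  rewrite mulr0 subr0 mulr1 => /(congr1 val); rewrite /= val_Zp_nat //.
  rewrite modn_small; first by move=> p0; rewrite p0 in pp.
  by rewrite -{1}(mul1n p) ltn_mul2r p1 (ltnW p1).
have hub : forall n x, x \in nondominant G f -> x ^+ (p ^ n) = 1 ->
    connect (reduced_rel G f) x z.
  elim=> [|n IH] x ndx xe.
    move: ndx; rewrite inE => /andP[_ /negP nd]; exfalso; apply: nd.
    rewrite expn0 expg1 in xe; rewrite xe.
    by apply: (pc_dom hstem (group1 G)) => w Gw; apply: (pc1 hstem Gw).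
  have Gx : x \in G by move: ndx; rewrite inE => /andP[].
  case: (boolP (dominant G f (x ^+ p))) => dxp.
    case: (eqVneq x z) => [-> | nxz]; first exact: connect0.
    apply: connect1; rewrite /reduced_rel /= ndx ndz /=.
    apply: (pc_adj hstem) => //.
    exact: (pcXX hstem hab Gx Ga (dom_pc hstem dxp Ga)).
  have ndxp : x ^+ p \in nondominant G f by rewrite inE groupX.
  apply: connect_trans (IH _ ndxp _); last by rewrite -expgM -expnS.
  case: (eqVneq x (x ^+ p)) => [<- | nxp]; first exact: connect0.
  apply: connect1; rewrite /reduced_rel /= ndx ndxp /=.
  apply: (pc_adj hstem) => //; first exact: groupX.
  exact: (pcX hstem).
have hubG : forall x, x \in nondominant G f -> connect (reduced_rel G f) x z.
  move=> x ndx; apply: (hub N) => //; apply: expG.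
  by move: ndx; rewrite inE => /andP[].
case=> u [v [ndu ndv /negP ncon]]; apply: ncon.
apply: connect_trans (hubG u ndu) _.
by rewrite (sym_connect_sym (rel_sym hstem)); apply: hubG.
Qed.

Lemma bigdprod_exp (gT : finGroupType) (s : seq gT) (K : {group gT}) n :
  \big[dprod/1]_(x <- s) <[x]> = K -> (forall x, x \in s -> x ^+ n = 1) ->
  forall e, e \in K -> e ^+ n = 1.
Proof.
elim: s K => [|x s IH] K.
  by rewrite big_nil => <- _ e /set1P ->; apply: expg1n.
rewrite big_cons => d xs.
have [[_ K' _ dK'] _ _ _] := dprodP d; rewrite dK' in d.
move=> e Ke; have [y [z [yx zK -> _]]] := mem_dprod d Ke.
have [_ _ cK' _] := dprodP d.
have /centsP cc := cK'.
rewrite expgMn; last exact: commute_sym (cc z zK y yx).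
have hs : forall w, w \in s -> w ^+ n = 1 by move=> w ws; apply: xs; rewrite inE ws orbT.
rewrite (IH K' dK' hs z zK) mulg1.
case/cycleP: yx => i ->; rewrite -expgM mulnC expgM.
by rewrite xs ?inE ?eqxx // expg1n.
Qed.

Lemma prod_expn (p : nat) (r : seq nat) :
  (\prod_(i <- [seq p ^ j | j <- r]) i)%N = (p ^ (\sum_(j <- r) j))%N.
Proof.
elim: r => [|j r IH]; first by rewrite !big_nil.
by rewrite /= !big_cons IH expnD.
Qed.

Theorem theorem4p6 (gT : finGroupType) (G : {group gT}) (p : nat) (r : seq nat)
    (hp : prime p) (hab : abelian G)
    (htype : abelian_type G = [seq (p ^ ri)%N | ri <- r])
    (hsort : sorted geq r) (hpos : all (fun ri => 0 < ri)%N r)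
    (hk : (2 <= size r)%N) (hnc : ~~ cyclic G)
    (hT : finGroupType) (H : {group hT}) (f : {morphism H >-> gT})
    (hcov : schur_cover G f) :
  reduced_disconnected G f <-> nth 0%N r 1 = 1%N.
Proof.
case: hcov => hstem hmax.
have [b0 defG0 ob] := abelian_structure hab.
rewrite htype in ob.
have cardG : #|G| = (p ^ (\sum_(j <- r) j))%N.
  rewrite -(bigdprod_card defG0) -prod_expn -ob big_map.
  by apply: eq_bigr => x _.
have expG : forall x, x \in G -> x ^+ (p ^ (\sum_(j <- r) j)) = 1.
  by move=> x Gx; rewrite -cardG expg_cardG.
move: hsort hpos hk ob {htype cardG} expG.
case: r => [|r1 [|r2 rs]] //= hsort hpos _ ob expG.
case: b0 defG0 ob => [|a [|b rest]] //= defG0 [oa obb orest].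
rewrite !big_cons in defG0.
have [[_ E _ defE] _ _ _] := dprodP defG0; rewrite defE in defG0.
have [[_ E2 _ defE2] _ _ _] := dprodP defE; rewrite defE2 in defE.
have p1 : 1 < p by apply: prime_gt1.
case/andP: hsort => r12 hsort2.
have r2s : all (geq r2) rs.
  by apply: order_path_min hsort2 => x y z h1 h2; apply: leq_trans h2 h1.
case/and3P: hpos => r1p r2p rsp.
split.
  move=> dis; apply/eqP; apply: contraT => nr2.
  have r22 : 2 <= r2 by rewrite ltn_neqAle eq_sym nr2 r2p.
  have pa : (p * p) %| #[a].
    by rewrite oa -{1}(expn1 p) -expnSr dvdn_exp2l // (leq_trans r22).
  have pb : (p * p) %| #[b].
    by rewrite obb -{1}(expn1 p) -expnSr dvdn_exp2l.
  by case: (caseB hstem hab hmax hp defG0 defE pa pb expG dis).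
move=> r21.
have expE : forall e, e \in E -> e ^+ p = 1.
  apply: (bigdprod_exp (s := b :: rest)) => //; first by rewrite big_cons defE2.
  move=> x; rewrite inE => /orP[/eqP -> | xr].
    have ob1 : #[b] = p by rewrite obb r21 expn1.
    by rewrite -ob1 expg_order.
  have : #[x] \in [seq (p ^ j)%N | j <- rs] by rewrite -orest; apply: map_f.
  case/mapP => j js.
  have j1 : j = 1%N.
    have jr : j <= r2 := allP r2s j js.
    apply/eqP; rewrite eqn_leq -{1}r21 jr /=.
    exact: (allP rsp j js).
  by move=> ox; rewrite -(expn1 p) -j1 -ox expg_order.
have Eb : b \in E.
  have [_ eE _ _] := dprodP defE.
  by rewrite -eE; apply: (subsetP (mulG_subl _ _)); apply: cycle_id.
have pa : p %| #[a] by rewrite oa; apply: dvdn_exp r1p (dvdnn p).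
have nb1 : b != 1.
  rewrite -order_eq1 obb r21 expn1; apply/eqP => pe; rewrite pe in hp.
  by [].
exact: (caseA hstem hab hmax hp defG0 pa expE Eb nb1).
Qed.
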